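(* Let $G$ be a group with finite generating set $S$ (with $S=S^{-1}$, $e\notin S$). For $n\ge 3$ let $\sigma=(1\,2\,\cdots\,n)\in\mathrm{Sym}(n)$ and $S_{\rm neg}=\{(1\,2),(2\,3),\dots,(n-1\ n),\sigma,\sigma^{-1}\}$. Then for all sufficiently large $n$ there is a map $i\colon G\to G\times\mathrm{Sym}(n)$ which is an isometric embedding for the word metrics of $(G,S)$ and $(G\times\mathrm{Sym}(n),S\boxtimes S_{\rm neg})$, such that $\kappa(i(g))<0$ for all $g\in G$ (curvature with respect to $S\boxtimes S_{\rm neg}$), and such that $d(i(gh),i(g)i(h))\le 1$ for all $g,h\in G$.
   Context: For generating sets $S_1,S_2$ of groups $G_1,G_2$, $S_1\boxtimes S_2=(S_1\times\{e\})\cup(\{e\}\times S_2)$ is the split generating set of $G_1\times G_2$. For a group with finite generating set $S$ ($S=S^{-1}$, $e\notin S$), $|x|$ is word length, $d(x,y)=|x^{-1}y|$, $\mathrm{Av}(g)=\frac{1}{|S|}\sum_{a\in S}|a^{-1}ga|$, and for $g\neq e$ the curvature is $\kappa(g)=\frac{|g|-\mathrm{Av}(g)}{|g|}$. *)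

(* Defs.v *)
From HB Require Import structures.
From mathcomp Require Import all_boot all_order all_algebra all_fingroup.
From mathcomp Require Import boolp.
Set Implicit Arguments. Unset Strict Implicit. Unset Printing Implicit Defensive.
Import Order.TTheory GRing.Theory Num.Theory.

Section Words.
Variables (G : eqType) (mul : G -> G -> G) (inv : G -> G) (e : G).

Definition is_group : Prop :=
  [/\ forall x y z, mul x (mul y z) = mul (mul x y) z,
      forall x, mul e x = x,
      forall x, mul x e = x,
      forall x, mul (inv x) x = e &
      forall x, mul x (inv x) = e].

Definition word_prod (l : seq G) : G := foldr mul e l.

Definition generates (S : seq G) : Prop :=
  forall x, exists l : seq G,
    all (fun a => (a \in S) || (inv a \in S)) l /\ word_prod l = x.

Definition has_word_of_len (S : seq G) (x : G) : pred nat :=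
  fun n => `[< exists l : seq G, [/\ size l = n, all (fun a => a \in S) l &
                                     word_prod l = x] >].

(* word length |x| w.r.t. S (0 if x is not a product of elements of S) *)
Definition wlen (S : seq G) (x : G) : nat :=
  match pselect (exists n, has_word_of_len S x n) with
  | left h => ex_minn h
  | right _ => 0
  end.

Definition wdist (S : seq G) (x y : G) : nat := wlen S (mul (inv x) y).

Definition Av (S : seq G) (g : G) : rat :=
  ((\sum_(a <- undup S) (wlen S (mul (mul (inv a) g) a))%:R) /
   (size (undup S))%:R)%R.

(* curvature kappa(g) = (|g| - Av(g)) / |g|, meaningful for g <> e *)
Definition kappa (S : seq G) (g : G) : rat :=
  (((wlen S g)%:R - Av S g) / (wlen S g)%:R)%R.

End Words.

Section Prod.
Variables (G : eqType) (mul : G -> G -> G) (inv : G -> G) (e : G) (n : nat).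
Definition pmul (x y : G * {perm 'I_n}) : G * {perm 'I_n} :=
  (mul x.1 y.1, (x.2 * y.2)%g).
Definition pinv (x : G * {perm 'I_n}) : G * {perm 'I_n} := (inv x.1, (x.2)^-1%g).
Definition pone : G * {perm 'I_n} := (e, 1%g).
Definition split_gen (S1 : seq G) (S2 : seq {perm 'I_n}) : seq (G * {perm 'I_n}) :=
  [seq (a, 1%g) | a <- S1] ++ [seq (e, s) | s <- S2].
End Prod.

(* sigma = (1 2 ... n), the cyclic shift i |-> i+1 mod n (0-based points) *)
Definition sigma_perm (n : nat) : {perm 'I_n} := perm (@ordS_inj n).

(* the adjacent transpositions (1 2), (2 3), ..., (n-1 n) (0-based: (k k+1)) *)
Definition adj_transp (n : nat) : seq {perm 'I_n} :=
  match n return seq {perm 'I_n} with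
  | 0 => [::]
  | m.+1 => [seq tperm (inord k : 'I_m.+1) (inord k.+1) | k <- iota 0 m]
  end.

Definition Sneg (n : nat) : seq {perm 'I_n} :=
  adj_transp n ++ [:: sigma_perm n; (sigma_perm n)^-1%g].

(* Main.v *)
Require Import Defs.
From HB Require Import structures.
From mathcomp Require Import all_boot all_order all_algebra all_fingroup.
From mathcomp Require Import boolp zify.
Import Order.TTheory GRing.Theory Num.Theory.
Set Implicit Arguments. Unset Strict Implicit.

Section W.
Variables (G : eqType) (mul : G -> G -> G) (e : G) (S : seq G).
Hypothesis mulA : forall x y z, mul x (mul y z) = mul (mul x y) z.
Hypothesis mul1 : forall x, mul e x = x.
Hypothesis mulr1 : forall x, mul x e = x.

Lemma wp_cat l1 l2 : word_prod mul e (l1 ++ l2) = mul (word_prod mul e l1) (word_prod mul e l2).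
Proof. elim: l1 => [|a l IH] /=; first by rewrite mul1. by rewrite IH mulA. Qed.

Lemma wp_filter l : word_prod mul e (filter (predC1 e) l) = word_prod mul e l.
Proof. elim: l => [|a l IH] //=; case: eqP => [->|_] /=; by rewrite IH ?mul1. Qed.

Lemma has_wordP x m : reflect (exists l, [/\ size l = m, all (fun a => a \in S) l & word_prod mul e l = x])
  (has_word_of_len mul e S x m).
Proof. exact: asboolP. Qed.

Definition rep x := exists m, has_word_of_len mul e S x m.

Lemma wlen_le x m : has_word_of_len mul e S x m -> wlen mul e S x <= m.
Proof.
rewrite /wlen => H; case: pselect => [h|nh]; last by exfalso; apply: nh; exists m.
by case: (ex_minnP h) => k _ Hmin; apply: Hmin.
Qed.

Lemma wlen_spec x : rep x -> has_word_of_len mul e S x (wlen mul e S x).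
Proof. rewrite /wlen; case: pselect => [h|nh] // _; by case: (ex_minnP h). Qed.

Lemma word_wlen x l : all (fun a => a \in S) l -> word_prod mul e l = x -> wlen mul e S x <= size l.
Proof. move=> h1 h2; apply: wlen_le; apply/has_wordP; by exists l. Qed.

Lemma rep_word x l : all (fun a => a \in S) l -> word_prod mul e l = x -> rep x.
Proof. move=> h1 h2; exists (size l); apply/has_wordP; by exists l. Qed.

Lemma wlen_word x : rep x -> exists l, [/\ size l = wlen mul e S x, all (fun a => a \in S) l & word_prod mul e l = x].
Proof. by move/wlen_spec/has_wordP. Qed.

Lemma wlen_sub x y : rep x -> rep y -> wlen mul e S (mul x y) <= wlen mul e S x + wlen mul e S y.
Proof.
move=> /wlen_word [l1 [s1 a1 w1]] /wlen_word [l2 [s2 a2 w2]].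
rewrite -s1 -s2 -size_cat; apply: word_wlen; first by rewrite all_cat a1 a2.
by rewrite wp_cat w1 w2.
Qed.

Lemma wlen_ge2 x : rep x -> x != e -> x \notin S -> 2 <= wlen mul e S x.
Proof.
move=> /wlen_word [[|a [|b l]] [<- al wl]] //= hx hS.
  by rewrite -wl eqxx in hx.
move: al wl hS => /= /andP[ha _]; rewrite mulr1 => <-; by rewrite ha.
Qed.

Lemma wlen_ge1 x : rep x -> x != e -> 1 <= wlen mul e S x.
Proof.
move=> /wlen_word [[|a l] [<- al wl]] //= hx.
by rewrite -wl eqxx in hx.
Qed.

Lemma wlen_gen a : a \in S -> wlen mul e S a <= 1.
Proof. move=> ha; apply: (@word_wlen _ [:: a]) => /=; by rewrite ?ha ?mulr1. Qed.

Lemma wlen_e : wlen mul e S e = 0.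
Proof. apply/eqP; rewrite -leqn0; exact: (@word_wlen _ [::]). Qed.

End W.

Section P.
Variables (G : eqType) (mul : G -> G -> G) (e : G) (n : nat) (S : seq G) (SP : seq {perm 'I_n}).
Hypothesis mulA : forall x y z, mul x (mul y z) = mul (mul x y) z.
Hypothesis mul1 : forall x, mul e x = x.
Hypothesis mulr1 : forall x, mul x e = x.

Local Notation T := (split_gen e S SP).

Lemma wp_pair w : word_prod (pmul mul (n:=n)) (pone e n) w =
  (word_prod mul e (map fst w), word_prod (@mulg _) 1%g (map snd w)).
Proof. elim: w => [|u w IH] //=; by rewrite IH. Qed.

Lemma memT u : u \in T -> ((u.1 == e) || (u.1 \in S)) && ((u.2 == 1%g) || (u.2 \in SP)).
Proof.
rewrite mem_cat => /orP[] /mapP [x hx ->] /=; by rewrite hx eqxx ?orbT.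
Qed.

Lemma memT2 u : u \in T -> (u.1 == e) || (u.2 == 1%g).
Proof.
rewrite mem_cat => /orP[] /mapP [x hx ->] /=; by rewrite eqxx ?orbT.
Qed.

Lemma size_split (w : seq (G * {perm 'I_n})) : all (fun u => (u.1 == e) || (u.2 == 1%g)) w ->
  size (filter (predC1 e) (map fst w)) + size (filter (predC1 1%g) (map snd w)) <= size w.
Proof.
elim: w => [|u w IH] //= /andP[hu /IH]; case: (u.1 == e) hu => /=; case: (u.2 == 1%g) => //= _; lia.
Qed.

Lemma wp_split l1 l2 : word_prod (pmul mul (n:=n)) (pone e n)
   ([seq (a, 1%g) | a <- l1] ++ [seq (e, s) | s <- l2]) = (word_prod mul e l1, word_prod (@mulg _) 1%g l2).
Proof.
elim: l1 => [|a l IH] /=.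
  elim: l2 => [|s l IH] //=; by rewrite IH /pmul /= mul1.
by rewrite IH /pmul /= mul1g.
Qed.

Lemma wlen_prod x p : rep mul e S x -> rep (@mulg _) 1%g SP p ->
  wlen (pmul mul (n:=n)) (pone e n) T (x, p) = wlen mul e S x + wlen (@mulg _) 1%g SP p.
Proof.
move=> hx hp; apply/eqP; rewrite eqn_leq; apply/andP; split.
  case: (wlen_word hx) => [l1 [s1 a1 w1]]; case: (wlen_word hp) => [l2 [s2 a2 w2]].
  rewrite -s1 -s2 -(size_map (fun a => (a, 1%g) : G * {perm 'I_n}) l1) -(size_map (fun s => (e, s)) l2) -size_cat.
  apply: word_wlen.
    rewrite all_cat; apply/andP; split; apply/allP => u /mapP [y hy ->]; rewrite mem_cat.
      by rewrite map_f ?(allP a1).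
    by rewrite orbC map_f ?(allP a2).
  by rewrite wp_split w1 w2.
have hr : rep (pmul mul (n:=n)) (pone e n) T (x, p).
  case: (wlen_word hx) => [l1 [s1 a1 w1]]; case: (wlen_word hp) => [l2 [s2 a2 w2]].
  apply: (rep_word (l := [seq (a, 1%g) | a <- l1] ++ [seq (e, s) | s <- l2])).
    rewrite all_cat; apply/andP; split; apply/allP => u /mapP [y hy ->]; rewrite mem_cat.
      by rewrite map_f ?(allP a1).
    by rewrite orbC map_f ?(allP a2).
  by rewrite wp_split w1 w2.
case: (wlen_word hr) => w [<- aw ww].
have hall : all (fun u => (u.1 == e) || (u.2 == 1%g)) w.
  by apply/allP => u /(allP aw) /memT2.
apply: leq_trans (size_split hall); apply: leq_add.
  apply: word_wlen.
    apply/allP => y; rewrite mem_filter => /andP[/= hy /mapP [u hu yE]]; subst y.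
    by move: (memT (allP aw u hu)) hy => /andP[/orP[/eqP->|//] _]; rewrite eqxx.
  by rewrite wp_filter // -[x]/((x, p).1) -ww wp_pair.
apply: word_wlen.
  apply/allP => y; rewrite mem_filter => /andP[/= hy /mapP [u hu yE]]; subst y.
  by move: (memT (allP aw u hu)) hy => /andP[_ /orP[/eqP->|//]]; rewrite eqxx.
by rewrite wp_filter; [rewrite -[p]/((x, p).2) -ww wp_pair | exact: mul1g].
Qed.
End P.

Section Perm.
Variable m : nat.
Hypothesis hm : 3 <= m.
Local Notation n := m.+1.
Local Notation sg := (sigma_perm m.+1).
Local Notation t k := (tperm (inord k : 'I_m.+1) (inord k.+1)).

Lemma ord_neq (a b : 'I_n) : nat_of_ord a != nat_of_ord b -> a != b.
Proof. by apply: contraNneq => ->. Qed.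

Lemma sigmaE (x : 'I_n) : val (sg x) = x.+1 %% n.
Proof. by rewrite /sigma_perm permE. Qed.

Lemma sigma_nofix x : sg x != x.
Proof.
apply/eqP => /(congr1 (@nat_of_ord _)); rewrite sigmaE => h.
have hx := ltn_ord x.
case E: (x.+1 == n).
  by move/eqP: E h => E; rewrite E modnn; lia.
by rewrite modn_small in h; lia.
Qed.

Lemma tau_nofix k x : (t k * sg * t k)%g x != x.
Proof.
rewrite !permM; apply/eqP => h.
have : sg (t k x) = t k x by rewrite -{2}h tpermK.
by apply/eqP; rewrite sigma_nofix.
Qed.

Section K.
Variable k : nat.
Hypothesis hk : k < m.
Let xk : 'I_n := inord (if k == 0 then m else k.-1).
Lemma xkv : nat_of_ord xk = (if k == 0 then m else k.-1).
Proof. rewrite inordK //; case: ifP => _; lia. Qed.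

Lemma t_xk : t k xk = xk.
Proof.
apply: tpermD; apply: ord_neq; rewrite xkv inordK; try (case: ifP => /eqP); lia.
Qed.

Lemma sg_xk : sg xk = inord k.
Proof.
apply: val_inj; rewrite /= sigmaE xkv inordK; last lia.
case: ifP => /eqP hk0; first by rewrite hk0 modnn.
rewrite prednK ?modn_small; lia.
Qed.

Lemma tau_xk : (t k * sg * t k)%g xk = inord k.+1.
Proof. by rewrite !permM t_xk sg_xk tpermL. Qed.

Lemma tau_neq_sigma : (t k * sg * t k)%g != sg.
Proof.
apply/eqP => h; have := congr1 (fun p : {perm 'I_n} => nat_of_ord (p xk)) h.
rewrite /= tau_xk sg_xk !inordK; lia.
Qed.

Lemma tau_neq_sigmaV : (t k * sg * t k)%g != sg^-1%g.
Proof.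
apply/eqP => h.
have : sg ((t k * sg * t k)%g xk) = xk by rewrite h permKV.
rewrite tau_xk => /(congr1 (@nat_of_ord _)); rewrite sigmaE xkv inordK; last lia.
case E: (k.+2 == n).
  move/eqP: E => E; rewrite E modnn; case: ifP => /eqP; lia.
rewrite modn_small; last lia.
case: ifP => /eqP; lia.
Qed.

Lemma tau_neq_t j : j < m -> (t k * sg * t k)%g != t j.
Proof.
move=> hj; apply/eqP => h.
pose y : 'I_n := inord (if j == 0 then m else 0).
have hy : nat_of_ord y = (if j == 0 then m else 0) by rewrite inordK //; case: ifP; lia.
have : t j y = y.
  apply: tpermD; apply: ord_neq; rewrite hy inordK; try (case: ifP => /eqP); lia.
by rewrite -h; apply/eqP; exact: tau_nofix.
Qed.
End K.

Lemma adj_transpE : adj_transp n = [seq t k | k <- iota 0 m].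
Proof. by []. Qed.

Lemma tau_notin k : k < m -> (t k * sg * t k)%g \notin Sneg n.
Proof.
move=> hk; rewrite mem_cat negb_or; apply/andP; split.
  rewrite adj_transpE; apply/negP => /mapP [j]; rewrite mem_iota add0n => /andP[_ hj] /eqP.
  by apply/negP; apply: tau_neq_t.
by rewrite !inE negb_or tau_neq_sigma // tau_neq_sigmaV.
Qed.

Lemma sigma_neq1 : sg != 1%g.
Proof. apply/eqP => h; have := sigma_nofix ord0; by rewrite h perm1 eqxx. Qed.

Lemma sigma_in : sg \in Sneg n.
Proof. by rewrite mem_cat !inE eqxx orbT. Qed.

Lemma sigmaV_in : sg^-1%g \in Sneg n.
Proof. by rewrite mem_cat !inE eqxx !orbT. Qed.

Lemma wlen_sigma : wlen (@mulg _) 1%g (Sneg n) sg = 1.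
Proof.
apply/eqP; rewrite eqn_leq wlen_gen ?sigma_in //=; first last.
  exact: mulg1.
apply: wlen_ge1; last exact: sigma_neq1.
apply: (@rep_word _ _ _ _ _ [:: sg]) => /=; by rewrite ?sigma_in ?mulg1.
Qed.

Lemma conj_bound s : s \in Sneg n ->
  rep (@mulg _) 1%g (Sneg n) (s^-1 * sg * s)%g /\
  1 + (s \in adj_transp n) <= wlen (@mulg _) 1%g (Sneg n) (s^-1 * sg * s)%g.
Proof.
move=> hs; case: (boolP (s \in adj_transp n)) => ha.
  move: (ha); rewrite adj_transpE => /mapP [k]; rewrite mem_iota add0n => /andP[_ hk] ->.
  rewrite tpermV.
  have hr : rep (@mulg _) 1%g (Sneg n) (t k * sg * t k)%g.
    apply: (@rep_word _ _ _ _ _ [:: t k; sg; t k]) => /=.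
      have hin : t k \in [seq t k0 | k0 <- iota 0 m] by apply/mapP; exists k; rewrite // mem_iota; lia.
      by rewrite sigma_in mem_cat adj_transpE hin.
    by rewrite mulg1 mulgA.
  split => //; rewrite /= add1n; apply: wlen_ge2 => //.
  - exact: mulg1.
  - by apply/eqP => h; have := tau_nofix k ord0; rewrite h perm1 eqxx.
  - exact: tau_notin.
have -> : (s^-1 * sg * s)%g = sg.
  move: hs; rewrite mem_cat (negbTE ha) /= !inE => /orP[] /eqP ->.
    by rewrite mulVg mul1g.
  by rewrite invgK mulgK.
rewrite wlen_sigma; split => //.
apply: (@rep_word _ _ _ _ _ [:: sg]) => /=; by rewrite ?sigma_in ?mulg1.
Qed.
End Perm.
Unset Implicit Arguments. Set Strict Implicit.

Lemma sum_bound (X : eqType) (U : seq X) (f : X -> nat) (a b : pred X) (L : nat) :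
  (forall u, u \in U -> L + b u <= f u + 2 * a u) ->
  L * size U + count b U <= \sum_(u <- U) f u + 2 * count a U.
Proof.
elim: U => [|u U IH] H; first by rewrite big_nil /= muln0.
rewrite big_cons /= mulnS.
have h1 := H u (mem_head _ _).
have h2 := IH (fun v hv => H v (mem_behead (s := u :: U) hv)).
move: h1 h2; case: (a u); case: (b u) => /=; lia.
Qed.

Lemma adj_uniq m : uniq (adj_transp m.+1).
Proof.
rewrite adj_transpE map_inj_in_uniq ?iota_uniq //.
move=> k1 k2; rewrite !mem_iota !add0n => /andP[_ h1] /andP[_ h2] heq.
case: (eqVneq k1 k2) => // hne; exfalso.
have := congr1 (fun p : {perm 'I_m.+1} => nat_of_ord (p (inord k1))) heq.
rewrite /= tpermL.
case: (eqVneq k1 k2.+1) => [E|hne2].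
  subst k1; rewrite tpermR !inordK; lia.
rewrite tpermD ?inordK; try lia; apply: ord_neq; rewrite !inordK; lia.
Qed.

Theorem mainTheorem11 (G : eqType) (mul : G -> G -> G) (inv : G -> G) (e : G)
  (HG : is_group mul inv e) (S : seq G)
  (HSsym : forall a, a \in S -> inv a \in S)
  (HSe : e \notin S)
  (HSgen : @generates G mul inv e S) :
  exists N : nat, forall n : nat, (3 <= n)%N -> (N <= n)%N ->
    exists i : G -> G * {perm 'I_n},
      let T := split_gen e S (Sneg n) in
      (forall g h : G,
          wdist (@pmul G mul n) (@pinv G inv n) (pone e n) T (i g) (i h)
          = wdist mul inv e S g h) /\
      (forall g : G,
          i g != pone e n /\
          (kappa (@pmul G mul n) (@pinv G inv n) (pone e n) T (i g) < 0)%R) /\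
      (forall g h : G,
          (wdist (@pmul G mul n) (@pinv G inv n) (pone e n) T
                 (i (mul g h)) (pmul mul (i g) (i h)) <= 1)%N).
Proof.
case: HG => mulA mul1 mulr1 mulV mulVr.
have invinv : forall x, inv (inv x) = x.
  by move=> x; rewrite -[LHS]mulr1 -(mulV x) mulA mulV mul1.
have inve : inv e = e by have := mulVr e; rewrite mul1.
have repG : forall x, rep mul e S x.
  move=> x; case: (HSgen x) => l [al wl]; apply: (rep_word (l := l)) wl.
  by apply/allP => a /(allP al) /orP[//|/HSsym]; rewrite invinv.
exists (2 * size S).+4 => -[|m] // h3 hN.
have hm : 3 <= m by lia.
exists (fun g => (g, sigma_perm m.+1)) => T.
have rep1 : rep (@mulg _) 1%g (Sneg m.+1) 1%g by apply: (rep_word (l := [::])).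
have repsg : rep (@mulg _) 1%g (Sneg m.+1) (sigma_perm m.+1).
  by apply: (rep_word (l := [:: sigma_perm m.+1])); rewrite /= ?sigma_in ?mulg1.
split; [|split].
- move=> g h; rewrite /wdist.
  have -> : pmul mul (pinv inv (g, sigma_perm m.+1)) (h, sigma_perm m.+1) = (mul (inv g) h, 1%g)
    by rewrite /pmul /= mulVg.
  by rewrite wlen_prod // wlen_e // addn0.
- move=> g; split.
    by apply/eqP => -[_ /eqP]; apply/negP; exact: sigma_neq1.
  set x := (g, sigma_perm m.+1).
  have hL : wlen (pmul mul (n:=m.+1)) (pone e m.+1) T x = wlen mul e S g + 1.
    by rewrite wlen_prod // wlen_sigma.
  set f := fun u => wlen (pmul mul (n:=m.+1)) (pone e m.+1) T (pmul mul (pmul mul (pinv inv u) x) u).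
  pose a := [pred u : G * {perm 'I_m.+1} | u.1 != e].
  pose b := [pred u : G * {perm 'I_m.+1} | (u.1 == e) && (u.2 \in adj_transp m.+1)].
  have hb : forall u, u \in T -> wlen mul e S g + 1 + b u <= f u + 2 * a u.
    move=> u; rewrite mem_cat => /orP[] /mapP [y hy ->]; rewrite /f /a /b /=.
      have ye : y != e by apply: contraNneq HSe => <-.
      rewrite (negbTE ye) /=.
      have -> : pmul mul (pmul mul (pinv inv (y, 1%g)) x) (y, 1%g) =
                (mul (mul (inv y) g) y, sigma_perm m.+1).
        by rewrite /pmul /= invg1 mul1g mulg1.
      rewrite wlen_prod // (wlen_sigma hm).
      set c := mul (mul (inv y) g) y.
      have gE : g = mul (mul y c) (inv y).
        by rewrite /c !mulA mulVr mul1 -mulA mulVr mulr1.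
      have h1 := wlen_sub mulA mul1 (repG (mul y c)) (repG (inv y)).
      have h2 := wlen_sub mulA mul1 (repG y) (repG c).
      have h5 := wlen_gen mulr1 hy.
      have h4 := wlen_gen mulr1 (HSsym _ hy).
      rewrite -gE in h1; lia.
    rewrite ?eqxx /=.
    have -> : pmul mul (pmul mul (pinv inv (e, y)) x) (e, y) =
              (g, (y^-1 * sigma_perm m.+1 * y)%g).
      by rewrite /pmul /= inve mul1 mulr1.
    case: (conj_bound hm hy) => hr hcb.
    rewrite wlen_prod // -?adj_transpE ?eqxx /=; move: hcb; case: (y \in adj_transp m.+1) => /=; lia.
  pose U := undup T.
  have hsum : (wlen mul e S g + 1) * size U + count b U <= \sum_(u <- U) f u + 2 * count a U.
    by apply: sum_bound => u; rewrite mem_undup; apply: hb.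
  have ca : count a U <= size S.
    apply: leq_trans (count_undup _ _) _; rewrite count_cat !count_map.
    have -> : count (preim (fun s => (e, s)) a) (Sneg m.+1) = 0.
      by apply/eqP; rewrite -leqn0 leqNgt -has_count; apply/hasP => -[s _] /=; rewrite eqxx.
    by rewrite addn0 count_size.
  have cb : m <= count b U.
    rewrite -size_filter.
    apply: (@leq_trans (size [seq (e, s) | s <- adj_transp m.+1])).
      by rewrite size_map adj_transpE size_map size_iota.
    apply: uniq_leq_size.
      rewrite map_inj_uniq ?adj_uniq //; by move=> s1 s2 [].
    move=> u /mapP [s hs ->]; rewrite mem_filter /= eqxx hs /= mem_undup mem_cat orbC map_f //.
    by rewrite mem_cat hs.
  have hlt : (wlen mul e S g + 1) * size U < \sum_(u <- U) f u.
    lia.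
  have hU : 0 < size U by apply: leq_trans (leq_trans cb (count_size _ _)); lia.
  rewrite /kappa /Av -/x -/U hL -natr_sum.
  rewrite pmulr_llt0 ?invr_gt0 ?ltr0n ?addn1 // subr_lt0 ltr_pdivlMr ?ltr0n // -natrM ltr_nat.
  by move: hlt; rewrite addn1.
- move=> g h; rewrite /wdist.
  have -> : pmul mul (pinv inv (mul g h, sigma_perm m.+1))
      (pmul mul (g, sigma_perm m.+1) (h, sigma_perm m.+1)) = (e, sigma_perm m.+1).
    by rewrite /pmul /= mulV mulKg.
  apply: (word_wlen (l := [:: (e, sigma_perm m.+1)])) => /=.
    by rewrite mem_cat map_f ?orbT ?sigma_in.
  by rewrite /pmul /= mul1 mulg1.
Qed.
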